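(* Let $\nu,T>0$, $W(x_1,x_2,x_3):=(\sin x_2,\sin x_3,\sin x_1)$ and $\psi(x):=e^{-\frac{|x|^2}{8\nu T}}$ on $\mathbb{R}^3$. Then $(0,0,0)$ is a hyperbolic zero of the vector field $\mathop{\mathrm{curl}}\mathop{\mathrm{curl}}(\psi W)$.
   Context: A zero $x_0$ of a $C^1$ vector field $v$ is hyperbolic if $v(x_0)=0$, $\nabla v(x_0)$ is invertible and has no eigenvalue with zero real part. *)

(* Defs.v *)
From HB Require Import structures.
From mathcomp Require Import all_boot all_order all_algebra.
From mathcomp Require Import all_classical all_reals.
From mathcomp Require Import topology normedtype sequences derive exp trigo.
From mathcomp Require Import complex.
Set Implicit Arguments. Unset Strict Implicit. Unset Printing Implicit Defensive.
Import Order.TTheory GRing.Theory Num.Theory.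
Import numFieldNormedType.Exports.
Local Open Scope ring_scope.

Section Defs.
Variable R : realType.
Local Notation V3 := 'rV[R]_3.

Definition i1 : 'I_3 := @Ordinal 3 0 isT.
Definition i2 : 'I_3 := @Ordinal 3 1 isT.
Definition i3 : 'I_3 := @Ordinal 3 2 isT.

Definition basis3 (i : 'I_3) : V3 := delta_mx 0 i.

Definition pd (i : 'I_3) (g : V3 -> R) (x : V3) : R := 'D_(basis3 i) g x.

Definition comp (F : V3 -> V3) (i : 'I_3) : V3 -> R := fun x => F x ord0 i.

Definition curl (F : V3 -> V3) : V3 -> V3 := fun x =>
  \row_(k < 3)
    (if k == i1 then pd i2 (comp F i3) x - pd i3 (comp F i2) x
     else if k == i2 then pd i3 (comp F i1) x - pd i1 (comp F i3) x
     else pd i1 (comp F i2) x - pd i2 (comp F i1) x).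

Definition W (x : V3) : V3 :=
  \row_(k < 3)
    (if k == i1 then sin (x ord0 i2)
     else if k == i2 then sin (x ord0 i3)
     else sin (x ord0 i1)).

Definition sqnorm (x : V3) : R := \sum_(i < 3) x ord0 i ^+ 2.

Definition psi (nu T : R) (x : V3) : R := expR (- (sqnorm x / (8 * nu * T))).

Definition psiW (nu T : R) (x : V3) : V3 := psi nu T x *: W x.

Definition C1 (v : V3 -> V3) : Prop :=
  (forall x, differentiable v x) /\ continuous (fun x => 'J v x).

Definition hyperbolic_zero (v : V3 -> V3) (x0 : V3) : Prop :=
  [/\ C1 v, v x0 = 0, 'J v x0 \in unitmx &
      forall lam : R[i],
        eigenvalue (map_mx (fun r : R => (r%:C)%C) ('J v x0)) lam ->
        complex.Re lam != 0].

End Defs.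

(* Main.v *)
Require Import Defs.
From HB Require Import structures.
From mathcomp Require Import all_boot all_order all_algebra.
From mathcomp Require Import all_classical all_reals.
From mathcomp Require Import topology normedtype sequences derive exp trigo.
From mathcomp Require Import complex.
From mathcomp Require Import ring lra.
Import Order.TTheory GRing.Theory Num.Theory.
Import numFieldNormedType.Exports.
Local Open Scope ring_scope.
Inductive ex : Type :=
| Cst of int | Par | Xc of 'I_3 | Add of ex & ex | Mul of ex & ex
| Sin of ex | Cos of ex | Exp of ex.

Definition iszero (e : ex) : bool :=
  match e with Cst (Posz 0) => true | _ => false end.
Definition isone (e : ex) : bool :=
  match e with Cst (Posz 1) => true | _ => false end.
Definition mkAdd e1 e2 :=
  if iszero e1 then e2 else if iszero e2 then e1 else Add e1 e2.
Definition mkMul e1 e2 :=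
  if iszero e1 || iszero e2 then Cst 0 else
  if isone e1 then e2 else if isone e2 then e1 else Mul e1 e2.

Fixpoint dex (i : 'I_3) (e : ex) : ex :=
  match e with
  | Cst _ | Par => Cst 0
  | Xc j => if i == j then Cst 1 else Cst 0
  | Add e1 e2 => mkAdd (dex i e1) (dex i e2)
  | Mul e1 e2 => mkAdd (mkMul e1 (dex i e2)) (mkMul e2 (dex i e1))
  | Sin e => mkMul (Cos e) (dex i e)
  | Cos e => mkMul (mkMul (Cst (-1)) (Sin e)) (dex i e)
  | Exp e => mkMul (Exp e) (dex i e)
  end.

Fixpoint subst0 (e : ex) : ex :=
  match e with
  | Cst _ | Par => e
  | Xc _ => Cst 0
  | Add e1 e2 => mkAdd (subst0 e1) (subst0 e2)
  | Mul e1 e2 => mkMul (subst0 e1) (subst0 e2)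
  | Sin e => let e' := subst0 e in if iszero e' then Cst 0 else Sin e'
  | Cos e => let e' := subst0 e in if iszero e' then Cst 1 else Cos e'
  | Exp e => let e' := subst0 e in if iszero e' then Cst 1 else Exp e'
  end.

Section Eval.
Variables (R : realType) (a : R).

Fixpoint eval (e : ex) (x : 'rV[R]_3) : R :=
  match e with
  | Cst z => z%:~R
  | Par => a
  | Xc i => x ord0 i
  | Add e1 e2 => eval e1 x + eval e2 x
  | Mul e1 e2 => eval e1 x * eval e2 x
  | Sin e => sin (eval e x)
  | Cos e => cos (eval e x)
  | Exp e => expR (eval e x)
  end.

Lemma iszeroP x e : iszero e -> eval e x = 0.
Proof. by case: e => // -[] // -[]. Qed.
Lemma isoneP x e : isone e -> eval e x = 1.
Proof. by case: e => // -[] // -[] // -[]. Qed.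

Lemma mkAddE e1 e2 x : eval (mkAdd e1 e2) x = eval e1 x + eval e2 x.
Proof.
rewrite /mkAdd; case: ifP => [/(iszeroP x)->|_]; first by rewrite add0r.
by case: ifP => [/(iszeroP x)->|_] //; rewrite addr0.
Qed.

Lemma mkMulE e1 e2 x : eval (mkMul e1 e2) x = eval e1 x * eval e2 x.
Proof.
rewrite /mkMul; case: ifP => [/orP[]/(iszeroP x)->|_] /=;
  rewrite ?mul0r ?mulr0 //.
case: ifP => [/(isoneP x)->|_]; first by rewrite mul1r.
by case: ifP => [/(isoneP x)->|_] //; rewrite mulr1.
Qed.

Lemma subst0E e x : eval (subst0 e) x = eval e 0.
Proof.
elim: e => //= [i|e1 IH1 e2 IH2|e1 IH1 e2 IH2|e IH|e IH|e IH].
- by rewrite mxE.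
- by rewrite mkAddE IH1 IH2.
- by rewrite mkMulE IH1 IH2.
- case: ifP => [/(iszeroP x)|_] /=; rewrite IH // => ->; by rewrite sin0.
- case: ifP => [/(iszeroP x)|_] /=; rewrite IH // => ->; by rewrite cos0.
- case: ifP => [/(iszeroP x)|_] /=; rewrite IH // => ->; by rewrite expR0.
Qed.

Lemma chain (f : 'rV[R]_3 -> R) (g : R -> R) d x v :
  differentiable f x -> is_derive (f x) 1 g d ->
  differentiable (g \o f) x /\ 'D_v (g \o f) x = d * 'D_v f x.
Proof.
move=> df dg.
have dg' : differentiable g (f x) by apply/derivable1_diffP; exact: ex_derive.
split; first exact: differentiable_comp.
rewrite deriveE; last exact: differentiable_comp.
rewrite diff_comp // /= diff1E // derive1E derive_val -deriveE //.
by rewrite mulrC.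
Qed.


Lemma coordD (x v : 'rV[R]_3) (i : 'I_3) :
  'D_v (fun t : 'rV[R]_3 => t ord0 i) x = v ord0 i.
Proof.
have H := @derive_mx R _ 1 3 id x v (@derivable_id _ _ x v).
rewrite derive_id in H.
have := congr1 (fun M : 'rV[R]_3 => M ord0 i) H. rewrite mxE /=. by move=> ->.
Qed.

Lemma evalP e :
  (forall x, differentiable (eval e) x) /\
  (forall i x, 'D_(basis3 R i) (eval e) x = eval (dex i e) x).
Proof.
elim: e => [z||j|e1 [D1 P1] e2 [D2 P2]|e1 [D1 P1] e2 [D2 P2]|e [D P]|e [D P]|e [D P]].
- split=> [x|i x]; first exact: differentiable_cst.
  by rewrite /= (derive_cst (z%:~R : R)).
- split=> [x|i x]; first exact: differentiable_cst.
  by rewrite /= (derive_cst a).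
- split=> [x|i x]; first exact: differentiable_coord.
  rewrite /= coordD /basis3 mxE eqxx /= eq_sym.
  by case: (i == j).
- split=> [x|i x]; first exact: differentiableD.
  rewrite mkAddE -P1 -P2 (_ : eval (Add e1 e2) = eval e1 + eval e2) //.
  by rewrite deriveD //; apply: diff_derivable.
- split=> [x|i x]; first exact: differentiableM.
  rewrite mkAddE !mkMulE -P1 -P2 (_ : eval (Mul e1 e2) = eval e1 * eval e2) //.
  rewrite deriveM; try by apply: diff_derivable.
  rewrite /= mulrC [X in _ + X]mulrC. rewrite -[_ *: _]/(_ * _); ring.
- split=> [x|i x]; first by case: (@chain (eval e) sin _ x 0 (D x) (is_derive_sin _)).
  case: (@chain (eval e) sin _ x (basis3 R i) (D x) (is_derive_sin _)) => _ /= ->.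
  by rewrite mkMulE P.
- split=> [x|i x]; first by case: (@chain (eval e) cos _ x 0 (D x) (is_derive_cos _)).
  case: (@chain (eval e) cos _ x (basis3 R i) (D x) (is_derive_cos _)) => _ /= ->.
  by rewrite !mkMulE P /=; ring.
- split=> [x|i x]; first by case: (@chain (eval e) expR _ x 0 (D x) (is_derive_expR _)).
  case: (@chain (eval e) expR _ x (basis3 R i) (D x) (is_derive_expR _)) => _ /= ->.
  by rewrite mkMulE P.
Qed.

End Eval.
Arguments eval {R}.
Arguments evalP {R}.

Lemma det3 (F : comNzRingType) (M : 'M[F]_3) :
  \det M = M 0 0 * M 1 1 * M 2 2 + M 0 1 * M 1 2 * M 2 0 + M 0 2 * M 1 0 * M 2 1
         - M 0 2 * M 1 1 * M 2 0 - M 0 0 * M 1 2 * M 2 1 - M 0 1 * M 1 0 * M 2 2.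
Proof.
pose f (i j : nat) := M (inord i) (inord j).
have HM : forall x y, M x y = f x y by move=> x y; rewrite /f !inord_val.
rewrite (expand_det_row _ 0) !big_ord_recl big_ord0 /=.
rewrite /cofactor !(expand_det_row _ 0) !big_ord_recl !big_ord0 /=.
rewrite /cofactor !det_mx11 !mxE !HM /=.
rewrite /bump /=.
ring.
Qed.

Definition Jf (R : realType) (a : R) (i j : nat) : R :=
  match i, j with
  | 0, 1 | 1, 2 | 2, 0 => -2 * a
  | 0, 2 | 1, 0 | 2, 1 => 1 + 8 * a
  | _, _ => 0
  end.
Arguments Jf {R}.
Definition Jm (R : realType) (a : R) : 'M[R]_3 := \matrix_(i, j) Jf a i j.

Arguments Jm {R}.
Lemma Jm_hyp (R : realType) (a : R) : 0 < a ->
  Jm a \in unitmx /\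
  forall lam : R[i],
    eigenvalue (map_mx (fun r : R => (r%:C)%C) (Jm a)) lam ->
    complex.Re lam != 0.
Proof.
move=> a0; split.
  rewrite unitmxE unitfE det3 !mxE /=.
  apply: lt0r_neq0; nra.
move=> lam ev; apply/negP => /eqP re0.
have : \det (lam%:M - map_mx (fun r : R => (r%:C)%C) (Jm a)) == 0.
  apply/det0P; case/eigenvalueP: ev => v Av vnz; exists v => //.
  by rewrite mulmxBr Av mul_mx_scalar subrr.
clear ev; rewrite det3 !mxE /=.
case: lam re0 => x y /= -> /eqP /(congr1 (@complex.Re R)) /=.
move=> H; nra.
Qed.

Definition psi_ex := Exp (Mul (Mul (Cst (-1)) Par)
  (Add (Add (Mul (Xc i1) (Xc i1)) (Mul (Xc i2) (Xc i2))) (Mul (Xc i3) (Xc i3)))).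
Definition Epw (k : 'I_3) :=
  Mul psi_ex (Sin (Xc (if k == i1 then i2 else if k == i2 then i3 else i1))).
Definition curl_ex (E : 'I_3 -> ex) (k : 'I_3) : ex :=
  if k == i1 then Add (dex i2 (E i3)) (Mul (Cst (-1)) (dex i3 (E i2)))
  else if k == i2 then Add (dex i3 (E i1)) (Mul (Cst (-1)) (dex i1 (E i3)))
  else Add (dex i1 (E i2)) (Mul (Cst (-1)) (dex i2 (E i1))).
Definition EE k := curl_ex (curl_ex Epw) k.

Section Main.
Variables (R : realType) (nu T : R).
Definition aa : R := (8 * nu * T)^-1.
Local Notation a := aa.
Local Notation v := (curl (curl (psiW nu T))).

Lemma compF k : Defs.comp (psiW nu T) k = eval a (Epw k).
Proof.
apply/funext => x; rewrite /Defs.comp /psiW.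
change ((psi nu T x *: W x) ord0 k) with (scalemx (psi nu T x) (W x) ord0 k).
rewrite !mxE /Epw /=.
congr (_ * _).
  rewrite /psi /sqnorm !big_ord_recr big_ord0 /=.
  pose g (n : nat) := x ord0 (inord n).
  have HM : forall y, x ord0 y = g y by move=> y; rewrite /g inord_val.
  rewrite !HM /= /a; congr expR; ring.
by case: ifP => _ //; case: ifP.
Qed.

Lemma comp_curl F E : (forall k, Defs.comp F k = eval a (E k)) ->
  forall k, Defs.comp (curl F) k = eval a (curl_ex E k).
Proof.
move=> H k; apply/funext => x.
rewrite [LHS]/Defs.comp /curl mxE /curl_ex /pd !H !(proj2 (evalP a _)).
by case: ifP => _ /=; [|case: ifP => _ /=]; ring.
Qed.

Lemma compv k : Defs.comp v k = eval a (EE k).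
Proof. apply: comp_curl; apply: comp_curl; exact: compF. Qed.

Lemma v_fun : v = fun x => \sum_(k < 3) eval a (EE k) x *: delta_mx 0 k.
Proof.
apply/funext => x; rewrite {1}(row_sum_delta (v x)); apply: eq_bigr => k _.
by rewrite -compv.
Qed.

Lemma v_diff x : differentiable v x.
Proof.
rewrite v_fun.
have -> : (fun y => \sum_(k < 3) eval a (EE k) y *: delta_mx 0 k) =
  \sum_(k < 3) (fun y => eval a (EE k) y *: (delta_mx 0 k : 'rV[R]_3)).
  by apply/funext => y; rewrite fct_sumE.
apply: differentiable_sum => k; apply: differentiableZl.
exact: (proj1 (evalP a _)).
Qed.

Lemma J_eq x : 'J v x = \matrix_(i, j) eval a (dex i (EE j)) x.
Proof.
apply/matrixP => i j; rewrite /jacobian !mxE.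
rewrite -deriveE; last exact: v_diff.
rewrite derive_mx; last exact/diff_derivable/v_diff.
rewrite mxE -(proj2 (evalP a _)).
by rewrite -compv.
Qed.

Lemma cont_mx (G : 'I_3 -> 'I_3 -> 'rV[R]_3 -> R) x :
  (forall i j, {for x, continuous (G i j)}) ->
  {for x, continuous (fun y => \matrix_(i, j) G i j y)}.
Proof.
move=> HG.
have -> : (fun y => \matrix_(i, j) G i j y) =
  \sum_(i < 3) \sum_(j < 3) (fun y => G i j y *: (delta_mx i j : 'M[R]_3)).
  apply/funext => y; rewrite [LHS]matrix_sum_delta fct_sumE /=.
  apply: eq_bigr => i _; rewrite fct_sumE /=.
  by apply: eq_bigr => j _; rewrite mxE.
elim/big_ind: _ => [|f g Hf Hg|i _]; first exact: cst_continuous.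
  exact: continuousD.
elim/big_ind: _ => [|f g Hf Hg|j _]; first exact: cst_continuous.
  exact: continuousD.
exact: continuousZr_tmp.
Qed.

Lemma J_cont : continuous (fun x => 'J v x).
Proof.
move=> x.
rewrite (_ : (fun x => 'J v x) = fun x => \matrix_(i, j) eval a (dex i (EE j)) x);
  last by apply/funext => y; exact: J_eq.
apply: cont_mx => i j.
exact/differentiable_continuous/(proj1 (evalP a _)).
Qed.

Lemma ord3P (P : 'I_3 -> Prop) : P i1 -> P i2 -> P i3 -> forall k, P k.
Proof.
move=> H1 H2 H3 [[|[|[|n]]] Hn] //.
- by rewrite (_ : Ordinal Hn = i1) //; apply: val_inj.
- by rewrite (_ : Ordinal Hn = i2) //; apply: val_inj.
- by rewrite (_ : Ordinal Hn = i3) //; apply: val_inj.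
Qed.

Ltac ev0 := match goal with |- context [subst0 ?e] =>
  let r := eval vm_compute in (subst0 e) in
  rewrite (_ : subst0 e = r); [|by vm_compute] end.

Lemma v0 : v 0 = 0.
Proof.
apply/rowP => k; rewrite [RHS]mxE.
have -> : v 0 ord0 k = Defs.comp v k 0 by [].
rewrite compv -(@subst0E R a _ 0).
by elim/ord3P: k; ev0.
Qed.

Lemma J0 : 'J v 0 = Jm a.
Proof.
apply/matrixP => i j; rewrite J_eq !mxE -(@subst0E R a _ 0).
elim/ord3P: i; elim/ord3P: j; ev0; rewrite /=; ring.
Qed.

End Main.
Arguments aa {R}.

Theorem proposition4p6 (R : realType) (nu T : R) :
  0 < nu -> 0 < T ->
  hyperbolic_zero (curl (curl (psiW nu T))) 0.
Proof.
move=> hnu hT.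
have a0 : 0 < aa nu T by rewrite /aa invr_gt0 !mulr_gt0.
have [Hu He] := @Jm_hyp R (aa nu T) a0.
split.
- split; [exact: v_diff | exact: J_cont].
- exact: v0.
- by rewrite J0.
- by rewrite J0.
Qed.
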